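(* Let $K$ be as in the context and let $F=a_1x_1^4+\cdots+a_{11}x_{11}^4$ with all $a_i\in K\setminus\{0\}$. If $F$ is of type $(3,0,2,1)$, then $F$ has a nontrivial zero in $K^{11}$.
   Context: $K$ is one of $\mathbb{Q}_2(\sqrt2),\mathbb{Q}_2(\sqrt{10}),\mathbb{Q}_2(\sqrt{-2}),\mathbb{Q}_2(\sqrt{-10})$, with uniformizer $\pi$ and valuation $v_\pi$. The level of the variable $x_i$ is $v_\pi(a_i)$, considered modulo $4$. For nonnegative integers $s_0,s_1,s_2,s_3$, the form is said to be of type $(s_0,s_1,s_2,s_3)$ if there exists $j\in\mathbb{Z}/4$ such that for each $i\in\{0,1,2,3\}$ the number of variables whose level is congruent to $i+j$ modulo $4$ is at least $s_i$ (so types differing by a cyclic permutation of the entries are the same type). *)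

(* Defs.v *)
From HB Require Import structures.
From mathcomp Require Import all_boot all_order all_algebra.
Set Implicit Arguments. Unset Strict Implicit. Unset Printing Implicit Defensive.
Import Order.TTheory GRing.Theory Num.Theory.
Local Open Scope ring_scope.

(* The 2-adic fields Q_2(sqrt d) are not in the libraries; we characterize
   them (up to isomorphism of valued fields) as fields K with a normalized
   discrete valuation v : K -> int (value on 0 irrelevant) such that
   char K = 0, v 2 = 2 (ramification index 2), residue field F_2,
   K complete for v, and d is a square in K. *)

Definition vge (K : fieldType) (v : K -> int) (x : K) (n : int) : Prop :=
  x = 0 \/ n <= v x.

Definition is_valuation (K : fieldType) (v : K -> int) : Prop :=
  (forall x y : K, x != 0 -> y != 0 -> v (x * y) = v x + v y) /\
  (forall x y : K, x != 0 -> y != 0 -> x + y != 0 ->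
      Num.min (v x) (v y) <= v (x + y)).

Definition v_cauchy (K : fieldType) (v : K -> int) (s : nat -> K) : Prop :=
  forall n : int, exists N : nat, forall m k : nat,
    (N <= m)%N -> (N <= k)%N -> vge v (s m - s k) n.

Definition v_converges (K : fieldType) (v : K -> int) (s : nat -> K) (l : K) : Prop :=
  forall n : int, exists N : nat, forall m : nat, (N <= m)%N -> vge v (s m - l) n.

Definition v_complete (K : fieldType) (v : K -> int) : Prop :=
  forall s : nat -> K, v_cauchy v s -> exists l : K, v_converges v s l.

Definition is_Q2_sqrt (K : fieldType) (v : K -> int) (d : int) : Prop :=
  is_valuation v /\
  (forall n : nat, (n.+1)%:R != (0 : K)) /\
  (exists pi : K, pi != 0 /\ v pi = 1) /\
  v 2%:R = 2 /\
  (forall x : K, vge v x 0 -> vge v x 1 \/ vge v (x - 1) 1) /\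
  v_complete v /\
  (exists r : K, r ^+ 2 = d%:~R).

Definition level (K : fieldType) (v : K -> int) (a : K) : int := (v a %% 4)%Z.

Definition of_type (K : fieldType) (v : K -> int) (n : nat) (a : 'I_n -> K)
    (s0 s1 s2 s3 : nat) : Prop :=
  exists j : 'I_4, forall i : 'I_4,
    (nth 0%N [:: s0; s1; s2; s3] i <=
      #|[set k : 'I_n | level v (a k) == (((i : nat) + j)%:Z %% 4)%Z]|)%N.

(* Main.v *)
Require Import Defs.
From mathcomp Require Import all_boot all_order all_algebra.
From mathcomp Require Import zify ring.
Import Order.TTheory GRing.Theory Num.Theory.
Local Open Scope ring_scope.


Lemma pick1 (T : finType) (S : {set T}) : (1 <= #|S|)%N -> exists k, k \in S.
Proof. by move/card_gt0P. Qed.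

Lemma pick2 (T : finType) (S : {set T}) : (2 <= #|S|)%N ->
  exists k1 k2, [/\ k1 \in S, k2 \in S & k1 != k2].
Proof.
move=> h. have [k1 k1S] := pick1 _ _ (leq_trans (isT : (1 <= 2)%N) h).
move: h; rewrite (cardsD1 k1) k1S add1n ltnS => /(pick1 _ _) [k2].
rewrite in_setD1 => /andP [n21 k2S]. exists k1, k2; split => //. by rewrite eq_sym.
Qed.

Lemma pick3 (T : finType) (S : {set T}) : (3 <= #|S|)%N ->
  exists k1 k2 k3, [/\ k1 \in S, k2 \in S, k3 \in S & [/\ k1 != k2, k1 != k3 & k2 != k3]].
Proof.
move=> h. have [k1 k1S] := pick1 _ _ (leq_trans (isT : (1 <= 3)%N) h).
move: h; rewrite (cardsD1 k1) k1S add1n ltnS => /(pick2 _ _) [k2 [k3 []]].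
rewrite !in_setD1 => /andP [n21 k2S] /andP [n31 k3S] n23.
exists k1, k2, k3; split => //; split => //; by rewrite eq_sym.
Qed.

Lemma nsym {T : eqType} {x y : T} : x != y -> (y == x) = false.
Proof. by rewrite eq_sym => /negbTE. Qed.

Lemma sum_supp (R : nmodType) (n : nat) (f : 'I_n -> R) (s : seq 'I_n) :
  uniq s -> (forall k, k \notin s -> f k = 0) -> \sum_(k < n) f k = \sum_(k <- s) f k.
Proof.
move=> us hf. rewrite (bigID (fun k => k \in s)) /= [X in _ + X]big1 ?addr0.
  by rewrite big_uniq.
by move=> k /hf.
Qed.

Section Val.
Variable K : fieldType.
Variable v : K -> int.
Hypothesis vM : forall {x y : K}, x != 0 -> y != 0 -> v (x * y) = v x + v y.
Hypothesis vD : forall {x y : K}, x != 0 -> y != 0 -> x + y != 0 ->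
      Num.min (v x) (v y) <= v (x + y).
Hypothesis v2 : v 2 = 2.
Hypothesis two_nz : (2 : K) != 0.
Hypothesis res : forall {x : K}, vge v x 0 -> vge v x 1 \/ vge v (x - 1) 1.

Hypothesis hchar : forall n : nat, (n.+1)%:R != (0 : K).

Lemma v1 : v 1 = 0.
Proof. have := vM (oner_neq0 K) (oner_neq0 K). rewrite mulr1 => h. by apply: (addrI (v 1)); rewrite addr0 -h. Qed.

Lemma vN1 : v (-1) = 0.
Proof.
have h : (-1 : K) != 0 by rewrite oppr_eq0 oner_neq0.
have := vM h h. rewrite mulrNN mulr1 v1. lia.
Qed.

Lemma vN x : x != 0 -> v (- x) = v x.
Proof.
move=> hx. have h : (-1 : K) != 0 by rewrite oppr_eq0 oner_neq0.
by rewrite -mulN1r vM // vN1 add0r.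
Qed.

Lemma vdiv {x y} : x != 0 -> y != 0 -> v (x / y) = v x - v y.
Proof.
move=> hx hy. have hq : x / y != 0 by rewrite mulf_neq0 // invr_eq0.
have := vM hq hy. rewrite divfK //. lia.
Qed.

Lemma vge0 n : vge v 0 n.
Proof. by left. Qed.

Lemma vge_exact x : vge v x (v x).
Proof. by right. Qed.

Lemma vge_le {x n m} : vge v x n -> m <= n -> vge v x m.
Proof. move=> [->|h] hm; [by left| right; lia]. Qed.

Lemma vge_opp {x n} : vge v x n -> vge v (- x) n.
Proof. move=> [->|h]; [by left; rewrite oppr0|]. 
case: (eqVneq x 0) => [->|hx]; [by left; rewrite oppr0| right; rewrite vN //]. Qed.

Lemma vge_add {x y n} : vge v x n -> vge v y n -> vge v (x + y) n.
Proof.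
move=> [->|hx]; first by rewrite add0r.
move=> [->|hy]; first by rewrite addr0; right.
case: (eqVneq x 0) => [->|x0]; first by rewrite add0r; right.
case: (eqVneq y 0) => [->|y0]; first by rewrite addr0; right.
case: (eqVneq (x + y) 0) => [->|s0]; first by left.
right. have := vD x0 y0 s0. lia.
Qed.

Lemma vge_sub {x y n} : vge v x n -> vge v y n -> vge v (x - y) n.
Proof. by move=> hx hy; apply: vge_add => //; apply: vge_opp. Qed.

Lemma vge_mul {x y n m} : vge v x n -> vge v y m -> vge v (x * y) (n + m).
Proof.
move=> [->|hx]; first by rewrite mul0r; left.
move=> [->|hy]; first by rewrite mulr0; left.
case: (eqVneq x 0) => [->|x0]; first by rewrite mul0r; left.
case: (eqVneq y 0) => [->|y0]; first by rewrite mulr0; left.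
right. rewrite vM //. lia.
Qed.

Lemma vge_divr {x y n} : vge v x n -> y != 0 -> vge v (x / y) (n - v y).
Proof.
move=> [->|hx] y0; first by rewrite mul0r; left.
case: (eqVneq x 0) => [->|x0]; first by rewrite mul0r; left.
right. rewrite vdiv //. lia.
Qed.

Lemma vge_eq0 x : (forall n, vge v x n) -> x = 0.
Proof.
move=> h. case: (eqVneq x 0) => // x0.
case: (h (v x + 1)) => // hv. lia.
Qed.

Lemma vge_or x n : vge v x n \/ (x != 0 /\ v x < n).
Proof.
case: (eqVneq x 0) => [->|x0]; first by left; left.
case: (leP n (v x)) => h; [by left; right | by right].
Qed.

Lemma vge2 : vge v 2 2.
Proof. by right; rewrite v2. Qed.

Lemma key {x y} : x != 0 -> y != 0 -> v x = v y -> vge v (x + y) (v y + 1).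
Proof.
move=> x0 y0 hxy.
have q0 : x / y != 0 by rewrite mulf_neq0 // invr_eq0.
have vq : v (x / y) = 0 by rewrite vdiv // hxy; lia.
have hq1 : vge v (x / y - 1) 1.
  have h0 : vge v (x / y) 0 by right; rewrite vq.
  case: (res h0) => [[h|h]|//].
  - by move: q0; rewrite h eqxx.
  - lia.
have -> : x + y = (x / y - 1 + 2) * y.
  by rewrite mulrDl mulrBl divfK // mul1r; ring.
rewrite [v y + 1]addrC. apply: vge_mul; last exact: vge_exact.
apply: vge_add => //. apply: vge_le vge2 _. lia.
Qed.

Lemma strict {x y} : x != 0 -> vge v y (v x + 1) -> x + y != 0 /\ v (x + y) = v x.
Proof.
move=> x0 [->|hy]; first by rewrite addr0.
case: (eqVneq y 0) => [->|y0]; first by rewrite addr0.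
have s0 : x + y != 0.
  apply/eqP => hs. have ey : y = - x by apply/eqP; rewrite -addr_eq0 addrC hs.
  move: hy; rewrite ey vN //. lia.
split => //. have h1 : Num.min (v x) (v y) <= v (x + y) := vD x0 y0 s0.
have y0' : - y != 0 by rewrite oppr_eq0.
have xy : x + y + - y != 0 by rewrite addrK x0.
have h2 : Num.min (v (x + y)) (v (- y)) <= v (x + y + - y) := vD s0 y0' xy.
rewrite addrK vN // in h2. lia.
Qed.

Lemma step {T s c} : vge v T s -> c != 0 -> v c = s ->
  exists e : K, (e = 0 \/ e = 1) /\ vge v (T + c * e) (s + 1).
Proof.
move=> hT c0 vc. case: (vge_or T (s + 1)) => [h|[T0 hT1]].
  by exists 0; split; [left| rewrite mulr0 addr0].
exists 1; split; [by right|]. rewrite mulr1.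
have vT : v T = v c by case: hT => [/eqP|]; [rewrite (negbTE T0)|lia].
rewrite -vc. exact: key.
Qed.


Fixpoint sqs (w : K) (n : nat) : K :=
  if n is n'.+1 then (w - sqs w n' ^+ 2) / 2 else 0.

Hypothesis comp : v_complete v.

Lemma sqrt_lift (m : int) (w : K) : 3 <= m -> vge v w (m + 2) ->
  exists s, vge v s m /\ (1 + s) ^+ 2 = 1 + w.
Proof.
move=> hm hw.
pose f := sqs w.
have fS : forall n, f n.+1 = (w - f n ^+ 2) / 2 by [].
have P : forall n : nat, vge v (f n) m /\ vge v (f n.+1 - f n) (m + n%:Z).
  elim=> [|n [IH1 IH2]].
    split; first exact: vge0.
    rewrite fS /= expr0n /= subr0 subr0.
    apply: vge_le (vge_divr hw two_nz) _. rewrite v2. lia.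
  have h1 : vge v (f n.+1) m.
    rewrite -(subrK (f n) (f n.+1)). apply: vge_add => //. apply: vge_le IH2 _. lia.
  split => //.
  have e : f n.+2 - f n.+1 = - ((f n.+1 - f n) * (f n.+1 + f n)) / 2.
    rewrite [f n.+2]fS {2}[f n.+1]fS. field. exact: two_nz.
  rewrite e. apply: vge_le (vge_divr (vge_opp (vge_mul IH2 (vge_add h1 IH1))) two_nz) _.
  rewrite v2. lia.
have C : forall p k : nat, vge v (f (p + k)%N - f p) (m + p%:Z).
  move=> p; elim=> [|k IH]; first by rewrite addn0 subrr; exact: vge0.
  rewrite addnS -(subrK (f (p + k)%N) (f (p + k).+1)) -addrA.
  apply: vge_add => //. apply: vge_le (proj2 (P (p + k)%N)) _. lia.
have cf : v_cauchy v f.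
  move=> n. exists (absz (n - m)) => a b ha hb.
  have -> : f a - f b = (f (absz (n - m) + (a - absz (n - m)))%N - f (absz (n - m)))
                       - (f (absz (n - m) + (b - absz (n - m)))%N - f (absz (n - m))).
    rewrite !subnKC //. ring.
  apply: vge_le (vge_sub (C _ _) (C _ _)) _. lia.
have [l hl] := comp f cf.
have hlm : vge v l m.
  have [N hN] := hl m. have h := hN N (leqnn N).
  have -> : l = f N - (f N - l) by ring.
  exact: vge_sub (proj1 (P N)) h.
exists l; split => //.
apply/eqP; rewrite -subr_eq0; apply/eqP; apply: vge_eq0 => n.
have [N hN] := hl n.
have h0 := hN N (leqnn N). have h1 := hN N.+1 (leqnSn N).
have hw' : w = 2 * f N.+1 + f N ^+ 2 by rewrite fS; field; exact: two_nz.
have -> : (1 + l) ^+ 2 - (1 + w) = (l - f N) * (l + f N) + 2 * (l - f N.+1).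
  rewrite hw'. ring.
have g0 : vge v (l - f N) n by rewrite -opprB; exact: vge_opp h0.
have g1 : vge v (l - f N.+1) n by rewrite -opprB; exact: vge_opp h1.
have g2 : vge v (l + f N) 0.
  apply: vge_le (vge_add hlm (proj1 (P N))) _. lia.
apply: vge_add.
  apply: vge_le (vge_mul g0 g2) _. lia.
apply: vge_le (vge_mul vge2 g1) _. lia.
Qed.

Lemma fourth_root {w : K} : vge v w 7 -> exists t, t ^+ 4 = 1 + w.
Proof.
move=> hw.
have [s [hs es]] := @sqrt_lift 5 w erefl hw.
have [s' [_ es']] := @sqrt_lift 3 s erefl hs.
exists (1 + s'). by rewrite -es -es' -exprM.
Qed.


Ltac slia := repeat match goal with H : ?T |- _ => lazymatch type of T with Prop => clear H end end; lia.

Lemma v_exp x n : x != 0 -> v (x ^+ n) = n%:Z * v x.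
Proof.
move=> x0; elim: n => [|n IH]; first by rewrite expr0 v1 mul0r.
rewrite exprS vM ?expf_neq0 // IH. lia.
Qed.

Lemma e4_id {e : K} : e = 0 \/ e = 1 -> e ^+ 4 = e.
Proof. by case=> ->; rewrite ?expr0n ?expr1n. Qed.

Lemma core_fixed {pp : K} {L : int} {A1 A2 A3 B1 B2 C : K} :
  pp != 0 -> v pp = 1 -> (1 + pp) ^+ 4 - 1 != 0 -> v ((1 + pp) ^+ 4 - 1) = 5 ->
  A1 != 0 -> A3 != 0 -> B1 != 0 -> B2 != 0 -> C != 0 ->
  v A1 = L -> v A3 = L -> v B1 = L + 2 -> v B2 = L + 2 -> v C = L + 3 ->
  vge v (A1 + A2) (L + 2) ->
  exists x1 x2 x3 y1 y2 z : K, x1 != 0 /\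
    A1 * x1 ^+ 4 + A2 * x2 ^+ 4 + A3 * x3 ^+ 4 + B1 * y1 ^+ 4 + B2 * y2 ^+ 4
      + C * z ^+ 4 = 0.
Proof.
move=> pp0 vpp r0 vr A10 A30 B10 B20 C0 vA1 vA3 vB1 vB2 vC h0.
set rho1 := (1 + pp) ^+ 4 - 1 in r0 vr.
have p40 : pp ^+ 4 != 0 by rewrite expf_neq0.
have vp4 : v (pp ^+ 4) = 4 by rewrite v_exp // vpp.
have [e1 [he1 h1]] := step h0 B10 vB1.
have vC' : v C = L + 2 + 1 by rewrite vC; slia.
have [e2 [he2 h2]] := step h1 C0 vC'.
have c30 : A3 * pp ^+ 4 != 0 by rewrite mulf_neq0.
have vc3 : v (A3 * pp ^+ 4) = L + 2 + 1 + 1 by rewrite vM // vA3 vp4; slia.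
have [e3 [he3 h3]] := step h2 c30 vc3.
have c40 : A1 * rho1 != 0 by rewrite mulf_neq0.
have vc4 : v (A1 * rho1) = L + 2 + 1 + 1 + 1 by rewrite vM // vA1 vr; slia.
have [e4 [he4 h4]] := step h3 c40 vc4.
have c50 : B2 * pp ^+ 4 != 0 by rewrite mulf_neq0.
have vc5 : v (B2 * pp ^+ 4) = L + 2 + 1 + 1 + 1 + 1 by rewrite vM // vB2 vp4; slia.
have [e5 [he5 h5]] := step h4 c50 vc5.
set F := _ + B2 * pp ^+ 4 * e5 in h5.
set x1 := 1 + pp * e4.
have x14 : x1 ^+ 4 = 1 + rho1 * e4.
  rewrite /x1 /rho1; case: he4 => ->.
    by rewrite mulr0 mulr0 !addr0 expr1n.
  by rewrite mulr1 mulr1 addrCA subrr addr0.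
have [x10 vx1] : x1 != 0 /\ v x1 = 0.
  rewrite /x1; case: he4 => ->; first by rewrite mulr0 addr0 oner_neq0 v1.
  rewrite mulr1 -v1. apply: strict; first exact: oner_neq0.
  by right; rewrite v1 vpp.
set P := A1 * x1 ^+ 4.
have P0 : P != 0 by rewrite mulf_neq0 // expf_neq0.
have vP : v P = L by rewrite vM ?expf_neq0 // v_exp // vx1 vA1; slia.
have hF : P + (A2 * 1 ^+ 4 + A3 * (pp * e3) ^+ 4 + B1 * e1 ^+ 4 + B2 * (pp * e5) ^+ 4
      + C * e2 ^+ 4) = F.
  rewrite /F /P x14 !exprMn (e4_id he1) (e4_id he2) (e4_id he3) (e4_id he5) expr1n. ring.
set w := - F / P.
have hw : vge v w 7.
  rewrite /w mulNr. apply: vge_opp. apply: vge_le (vge_divr h5 P0) _. rewrite vP. slia.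
have [t ht] := fourth_root hw.
have t0 : t != 0.
  apply/eqP => t0. move: ht; rewrite t0 expr0n /= => /eqP.
  rewrite eq_sym addr_eq0 => /eqP ew.
  have ew2 : w = -1 by rewrite ew opprK.
  move: hw; rewrite ew2 => -[/eqP|]; first by rewrite oppr_eq0 oner_eq0.
  by rewrite vN1.
exists (x1 * t), 1, (pp * e3), e1, (pp * e5), e2; split; first by rewrite mulf_neq0.
have -> : A1 * (x1 * t) ^+ 4 + A2 * 1 ^+ 4 + A3 * (pp * e3) ^+ 4 + B1 * e1 ^+ 4
    + B2 * (pp * e5) ^+ 4 + C * e2 ^+ 4 =
    (P + (A2 * 1 ^+ 4 + A3 * (pp * e3) ^+ 4 + B1 * e1 ^+ 4 + B2 * (pp * e5) ^+ 4
      + C * e2 ^+ 4)) + P * w.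
  rewrite /P exprMn ht. ring.
by rewrite hF /w mulrCA divff // mulr1 addrN.
Qed.

Lemma pair_sum {Ai Aj L} : Aj != 0 -> v Aj = L -> vge v (Ai - Aj) (L + 2) ->
  vge v (Ai + Aj) (L + 2).
Proof.
move=> j0 vj h.
have -> : Ai + Aj = (Ai - Aj) + 2 * Aj by ring.
apply: vge_add h _. have h2 := vge_mul vge2 (vge_exact Aj).
rewrite vj addrC in h2. exact: h2.
Qed.

Lemma diff1 {Ai Aj L} : Ai != 0 -> Aj != 0 -> v Ai = L -> v Aj = L ->
  vge v (Ai - Aj) (L + 1).
Proof.
move=> i0 j0 vi vj.
have j0' : - Aj != 0 by rewrite oppr_eq0.
have := key i0 j0' (etrans vi (esym (etrans (vN Aj j0) vj))).
by rewrite vN // vj.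
Qed.

Lemma core pp L A1 A2 A3 B1 B2 C :
  pp != 0 -> v pp = 1 -> (1 + pp) ^+ 4 - 1 != 0 -> v ((1 + pp) ^+ 4 - 1) = 5 ->
  A1 != 0 -> A2 != 0 -> A3 != 0 -> B1 != 0 -> B2 != 0 -> C != 0 ->
  v A1 = L -> v A2 = L -> v A3 = L -> v B1 = L + 2 -> v B2 = L + 2 -> v C = L + 3 ->
  exists x1 x2 x3 y1 y2 z : K, (x1 != 0 \/ x2 != 0 \/ x3 != 0) /\
    A1 * x1 ^+ 4 + A2 * x2 ^+ 4 + A3 * x3 ^+ 4 + B1 * y1 ^+ 4 + B2 * y2 ^+ 4
      + C * z ^+ 4 = 0.
Proof.
move=> pp0 vpp r0 vr A10 A20 A30 B10 B20 C0 vA1 vA2 vA3 vB1 vB2 vC.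
case: (vge_or (A1 - A2) (L + 2)) => [h12|[d12 l12]].
  have [x1 [x2 [x3 [y1 [y2 [z [nz e]]]]]]] :=
    core_fixed (pp:=pp) (L:=L) (A1:=A1) (A2:=A2) (A3:=A3) (B1:=B1) (B2:=B2) (C:=C) pp0 vpp r0 vr A10 A30 B10 B20 C0 vA1 vA3 vB1 vB2 vC (pair_sum A20 vA2 h12).
  by exists x1, x2, x3, y1, y2, z; split; [left|].
case: (vge_or (A1 - A3) (L + 2)) => [h13|[d13 l13]].
  have [x1 [x2 [x3 [y1 [y2 [z [nz e]]]]]]] :=
    core_fixed (pp:=pp) (L:=L) (A1:=A1) (A2:=A3) (A3:=A2) (B1:=B1) (B2:=B2) (C:=C) pp0 vpp r0 vr A10 A20 B10 B20 C0 vA1 vA2 vB1 vB2 vC (pair_sum A30 vA3 h13).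
  exists x1, x3, x2, y1, y2, z; split; first by left.
  by apply: etrans e; ring.
have e12 : v (A1 - A2) = L + 1.
  case: (diff1 A10 A20 vA1 vA2) => [/eqP|h]; [by rewrite (negbTE d12)|move: h l12; slia].
have e13 : v (A1 - A3) = L + 1.
  case: (diff1 A10 A30 vA1 vA3) => [/eqP|h]; [by rewrite (negbTE d13)|move: h l13; slia].
have h23 : vge v (A2 - A3) (L + 2).
  have h := diff1 d13 d12 e13 e12.
  rewrite (_ : A1 - A3 - (A1 - A2) = A2 - A3) in h; last by ring.
  rewrite (_ : L + 1 + 1 = L + 2) in h; last by ring. exact h.
have [x1 [x2 [x3 [y1 [y2 [z [nz e]]]]]]] :=
  core_fixed (pp:=pp) (L:=L) (A1:=A2) (A2:=A3) (A3:=A1) (B1:=B1) (B2:=B2) (C:=C) pp0 vpp r0 vr A20 A10 B10 B20 C0 vA2 vA1 vB1 vB2 vC (pair_sum A30 vA3 h23).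
exists x3, x1, x2, y1, y2, z; split; first by right; left.
by apply: etrans e; ring.
Qed.

Lemma vnat_ge0 n : vge v n%:R 0.
Proof.
elim: n => [|n IH]; first exact: vge0.
rewrite -addn1 natrD. apply: vge_add IH _. by right; rewrite v1.
Qed.

Lemma v_odd n : odd n -> v n%:R = 0.
Proof.
move=> hn. rewrite -(odd_double_half n) hn -mul2n natrD natrM.
have h : vge v (2%:R * (n./2)%:R) (v 1 + 1).
  apply: vge_le (vge_mul vge2 (vnat_ge0 _)) _. rewrite v1. done.
have [_ ->] := strict (oner_neq0 K) h. exact: v1.
Qed.

Lemma vge_2k k : vge v (2 * k%:R) 2.
Proof. apply: vge_le (vge_mul vge2 (vnat_ge0 k)) _. done. Qed.

Lemma vV x : x != 0 -> v (x^-1) = - v x.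
Proof.
move=> x0. have := vdiv (oner_neq0 K) x0. rewrite div1r v1 => ->. by rewrite sub0r.
Qed.

Lemma vexpz x (m : int) : x != 0 -> v (x ^ m) = m * v x.
Proof.
move=> x0. case: m => n.
  by rewrite -exprnP v_exp.
rewrite NegzE -exprnN vV ?expf_neq0 // v_exp //. rewrite mulNr. done.
Qed.

Lemma rho_lemma r e : r ^+ 2 = 2 * e -> e != 0 -> v e = 0 -> 1 + 2 * e != 0 ->
  v (1 + 2 * e) = 0 -> vge v (3 + e) 2 ->
  [/\ r != 0, v r = 1, (1 + r) ^+ 4 - 1 != 0 & v ((1 + r) ^+ 4 - 1) = 5].
Proof.
move=> hr e0 ve o0 vo h3.
have r20 : r ^+ 2 != 0 by rewrite hr mulf_neq0.
have r0 : r != 0 by apply: contraNneq r20 => ->; rewrite expr0n.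
have vr : v r = 1.
  have := v_exp r 2 r0. rewrite hr vM // v2 ve. 
  move=> h. move: h; slia.
have E : (1 + r) ^+ 4 - 1 = 2 * 2 * r * (1 + 2 * e) + 2 * 2 * e * (3 + e).
  rewrite (_ : (1 + r) ^+ 4 - 1 = 4 * r * (1 + r ^+ 2) + r ^+ 2 * (6 + r ^+ 2)); last by ring.
  rewrite hr. ring.
have X0 : 2 * 2 * r * (1 + 2 * e) != 0 by rewrite !mulf_neq0.
have vX : v (2 * 2 * r * (1 + 2 * e)) = 5.
  rewrite !vM ?mulf_neq0 // v2 vr vo. done.
have hY : vge v (2 * 2 * e * (3 + e)) (v (2 * 2 * r * (1 + 2 * e)) + 1).
  rewrite vX. apply: vge_le (vge_mul (vge_mul (vge_mul vge2 vge2) (vge_exact e)) h3) _.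
  rewrite ve. done.
have [s0 vs] := strict X0 hY.
split => //; rewrite E; [exact: s0|]. rewrite vs. exact: vX.
Qed.

Lemma scale r c t : r != 0 -> v r = 1 -> c != 0 -> (v c %% 4)%Z = (t %% 4)%Z ->
  c * (r ^ (- ((v c - t) %/ 4)%Z)) ^+ 4 != 0 /\
  v (c * (r ^ (- ((v c - t) %/ 4)%Z)) ^+ 4) = t.
Proof.
move=> r0 vr c0 hm.
have z0 : r ^ (- ((v c - t) %/ 4)%Z) != 0 by rewrite expfz_neq0.
split; first by rewrite mulf_neq0 // expf_neq0.
rewrite vM ?expf_neq0 // v_exp // vexpz // vr. move: hm. slia.
Qed.

Lemma rho_d d r : d \in [:: 2; 10; -2; -10] -> r ^+ 2 = d%:~R ->
  [/\ r != 0, v r = 1, (1 + r) ^+ 4 - 1 != 0 & v ((1 + r) ^+ 4 - 1) = 5].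
Proof.
rewrite !inE => /or4P [] /eqP -> hr.
- apply: (rho_lemma r 1).
  + by rewrite hr mulr1.
  + exact: oner_neq0.
  + exact: v1.
  + rewrite (_ : 1 + 2 * 1 = 3%:R); last by ring. exact: hchar.
  + rewrite (_ : 1 + 2 * 1 = 3%:R); last by ring. exact: v_odd.
  + rewrite (_ : 3 + 1 = 2 * 2%:R); last by ring. exact: vge_2k.
- apply: (rho_lemma r 5%:R).
  + rewrite hr. ring.
  + exact: hchar.
  + exact: v_odd.
  + rewrite (_ : 1 + 2 * 5%:R = 11%:R); last by ring. exact: hchar.
  + rewrite (_ : 1 + 2 * 5%:R = 11%:R); last by ring. exact: v_odd.
  + rewrite (_ : 3 + 5%:R = 2 * 4%:R); last by ring. exact: vge_2k.
- apply: (rho_lemma r (-1)).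
  + rewrite hr. ring.
  + by rewrite oppr_eq0 oner_eq0.
  + exact: vN1.
  + rewrite (_ : 1 + 2 * -1 = -1); last by ring. by rewrite oppr_eq0 oner_eq0.
  + rewrite (_ : 1 + 2 * -1 = -1); last by ring. exact: vN1.
  + rewrite (_ : 3 + -1 = 2 * 1%:R); last by ring. exact: vge_2k.
- apply: (rho_lemma r (- 5%:R)).
  + rewrite hr. ring.
  + by rewrite oppr_eq0 hchar.
  + rewrite vN ?hchar //. exact: v_odd.
  + rewrite (_ : 1 + 2 * - 5%:R = - 9%:R); last by ring. by rewrite oppr_eq0 hchar.
  + rewrite (_ : 1 + 2 * - 5%:R = - 9%:R); last by ring. rewrite vN ?hchar //. exact: v_odd.
  + rewrite (_ : 3 + - 5%:R = - (2 * 1%:R)); last by ring. apply: vge_opp. exact: vge_2k.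
Qed.

Lemma main_core (d : int) (r : K) : d \in [:: 2; 10; -2; -10] -> r ^+ 2 = d%:~R ->
  forall a : 'I_11 -> K, (forall k, a k != 0) -> of_type v a 3 0 2 1 ->
  exists x : 'I_11 -> K, (exists k, x k != 0) /\ \sum_(k < 11) a k * x k ^+ 4 = 0.
Proof.
move=> hd hr a anz [j hj].
have [r0 vr rho0 vrho] := rho_d d r hd hr.
have h0 := hj (@Ordinal 4 0 isT). have h2 := hj (@Ordinal 4 2 isT).
have h3 := hj (@Ordinal 4 3 isT).
rewrite /= in h0 h2 h3.
have [p1 [p2 [p3 [p1S p2S p3S [n12 n13 n23]]]]] := pick3 _ _ h0.
have [q1 [q2 [q1S q2S m12]]] := pick2 _ _ h2.
have [c0 c0S] := pick1 _ _ h3.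
rewrite !inE /level in p1S p2S p3S q1S q2S c0S.
have lv : forall k k' (A B : int), (v (a k) == A %[mod 4])%Z ->
    (v (a k') == B %[mod 4])%Z -> (A %% 4 != B %% 4)%Z -> k != k'.
  move=> k k' A B /eqP hA /eqP hB hAB; apply/eqP => e; move: hAB.
  by rewrite -hA -hB e eqxx.
have jl := ltn_ord j.
have d02 : (((0 + j)%N)%:Z %% 4 != ((2 + j)%N)%:Z %% 4)%Z by move: jl; slia.
have d03 : (((0 + j)%N)%:Z %% 4 != ((3 + j)%N)%:Z %% 4)%Z by move: jl; slia.
have d23 : (((2 + j)%N)%:Z %% 4 != ((3 + j)%N)%:Z %% 4)%Z by move: jl; slia.
pose sc := fun k (t : int) => r ^ (- ((v (a k) - t) %/ 4)%Z).
have [A10 vA1] := scale r (a p1) ((0 + j)%N) r0 vr (anz p1) (eqP p1S).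
have [A20 vA2] := scale r (a p2) ((0 + j)%N) r0 vr (anz p2) (eqP p2S).
have [A30 vA3] := scale r (a p3) ((0 + j)%N) r0 vr (anz p3) (eqP p3S).
have [B10 vB1] := scale r (a q1) ((2 + j)%N) r0 vr (anz q1) (eqP q1S).
have [B20 vB2] := scale r (a q2) ((2 + j)%N) r0 vr (anz q2) (eqP q2S).
have [C0 vC] := scale r (a c0) ((3 + j)%N) r0 vr (anz c0) (eqP c0S).
have e0 : ((0 + j)%N)%:Z = j%:Z by slia.
have e2 : ((2 + j)%N)%:Z = j%:Z + 2 by slia.
have e3 : ((3 + j)%N)%:Z = j%:Z + 3 by slia.
have {}vA1 := etrans vA1 e0. have {}vA2 := etrans vA2 e0.
have {}vA3 := etrans vA3 e0. have {}vB1 := etrans vB1 e2.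
have {}vB2 := etrans vB2 e2. have {}vC := etrans vC e3.
have [X1 [X2 [X3 [Y1 [Y2 [Z [nz e]]]]]]] :=
  core r j%:Z _ _ _ _ _ _ r0 vr rho0 vrho A10 A20 A30 B10 B20 C0 vA1 vA2 vA3 vB1 vB2 vC.
have k11 := lv _ _ _ _ p1S q1S d02. have k12 := lv _ _ _ _ p1S q2S d02.
have k21 := lv _ _ _ _ p2S q1S d02. have k22 := lv _ _ _ _ p2S q2S d02.
have k31 := lv _ _ _ _ p3S q1S d02. have k32 := lv _ _ _ _ p3S q2S d02.
have c1 := lv _ _ _ _ p1S c0S d03. have c2 := lv _ _ _ _ p2S c0S d03.
have c3 := lv _ _ _ _ p3S c0S d03.
have g1 := lv _ _ _ _ q1S c0S d23. have g2 := lv _ _ _ _ q2S c0S d23.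
pose x := fun k => if k == p1 then sc p1 ((0 + j)%N)%:Z * X1
  else if k == p2 then sc p2 ((0 + j)%N)%:Z * X2
  else if k == p3 then sc p3 ((0 + j)%N)%:Z * X3
  else if k == q1 then sc q1 ((2 + j)%N)%:Z * Y1
  else if k == q2 then sc q2 ((2 + j)%N)%:Z * Y2
  else if k == c0 then sc c0 ((3 + j)%N)%:Z * Z else 0.
exists x; split.
  case: nz => [h|[h|h]]; [exists p1|exists p2|exists p3];
  rewrite /x eqxx ?(nsym n12) ?(nsym n13) ?(nsym n23) /=;
  by apply: mulf_neq0 => //; apply: expfz_neq0.
rewrite (@sum_supp _ 11 (fun k => a k * x k ^+ 4) [:: p1; p2; p3; q1; q2; c0]).
- rewrite !big_cons big_nil /x !eqxx ?(nsym n12) ?(nsym n13) ?(nsym n23) ?(nsym m12)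
    ?(nsym k11) ?(nsym k12) ?(nsym k21) ?(nsym k22) ?(nsym k31) ?(nsym k32)
    ?(nsym c1) ?(nsym c2) ?(nsym c3) ?(nsym g1) ?(nsym g2) /=.
  apply: etrans e. rewrite /sc. ring.
- rewrite /= !inE ?(negbTE n12) ?(negbTE n13) ?(negbTE n23) ?(negbTE m12)
    ?(negbTE k11) ?(negbTE k12) ?(negbTE k21) ?(negbTE k22) ?(negbTE k31) ?(negbTE k32)
    ?(negbTE c1) ?(negbTE c2) ?(negbTE c3) ?(negbTE g1) ?(negbTE g2) //.
move=> k hk. rewrite /x.
do 6 (case: ifP => [/eqP ek|_]; first by move: hk; rewrite ek !inE eqxx ?orbT).
by rewrite expr0n mulr0.
Qed.
End Val.

Theorem mainTheorem7 (K : fieldType) (v : K -> int) (d : int) :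
  d \in [:: 2; 10; -2; -10] ->
  is_Q2_sqrt v d ->
  forall a : 'I_11 -> K,
    (forall k, a k != 0) ->
    of_type v a 3 0 2 1 ->
    exists x : 'I_11 -> K, (exists k, x k != 0) /\ \sum_(k < 11) a k * x k ^+ 4 = 0.
Proof.
move=> hd [[vM vD] [hchar [_ [v2 [hres [hcomp [r hr]]]]]]].
exact: (main_core K v vM vD v2 (hchar 1%N) hres hchar hcomp d r hd hr).
Qed.

Print Assumptions mainTheorem7.
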